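(* Let $X$ be a compact metric space and let $f\colon X\to X$ be a homeomorphism which is positively $n$-expansive (for some integer $n\geq1$), transitive, and has the shadowing property. Then $X$ is finite.
   Context: Let $(X,d)$ be a metric space and $f\colon X\to X$. For $x\in X$ and $c>0$, $W^s_c(x)=\{y\in X: d(f^k(y),f^k(x))\leq c \text{ for every } k\geq 0\}$. The map $f$ is positively $n$-expansive if there exists $c>0$ such that for every $x\in X$ the set $W^s_c(x)$ contains at most $n$ distinct points. $f$ is transitive if for every pair $U,V$ of nonempty open subsets of $X$ there is $k\in\mathbb{N}$ with $f^k(U)\cap V\neq\emptyset$. A sequence $(x_k)_{k\in\mathbb{Z}}$ is a $\delta$-pseudo orbit if $d(f(x_k),x_{k+1})<\delta$ for all $k$; it is $\varepsilon$-shadowed if there is $y\in X$ with $d(f^k(y),x_k)<\varepsilon$ for all $k\in\mathbb{Z}$. $f$ has the shadowing property if for every $\varepsilon>0$ there is $\delta>0$ such that every $\delta$-pseudo orbit is $\varepsilon$-shadowed. *)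

(* Defs.v *)
From Stdlib Require Import Reals List.
Open Scope R_scope.

Definition is_metric {X : Type} (d : X -> X -> R) : Prop :=
  (forall x y, 0 <= d x y) /\
  (forall x y, d x y = 0 <-> x = y) /\
  (forall x y, d x y = d y x) /\
  (forall x y z, d x z <= d x y + d y z).

Definition m_open {X : Type} (d : X -> X -> R) (U : X -> Prop) : Prop :=
  forall x, U x -> exists r, 0 < r /\ forall y, d x y < r -> U y.

Definition m_compact {X : Type} (d : X -> X -> R) : Prop :=
  forall (I : Type) (U : I -> X -> Prop),
    (forall i, m_open d (U i)) ->
    (forall x, exists i, U i x) ->
    exists l : list I, forall x, exists i, In i l /\ U i x.

Definition m_continuous {X : Type} (d : X -> X -> R) (f : X -> X) : Prop :=
  forall x eps, 0 < eps -> exists delta, 0 < delta /\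
    forall y, d x y < delta -> d (f x) (f y) < eps.

Definition homeomorphism {X : Type} (d : X -> X -> R) (f : X -> X) : Prop :=
  m_continuous d f /\
  exists g : X -> X, m_continuous d g /\
    (forall x, g (f x) = x) /\ (forall x, f (g x) = x).

Fixpoint iter {X : Type} (f : X -> X) (k : nat) (x : X) : X :=
  match k with O => x | S k' => f (iter f k' x) end.

Definition Ws {X : Type} (d : X -> X -> R) (f : X -> X) (c : R) (x : X) (y : X)
  : Prop := forall k : nat, d (iter f k y) (iter f k x) <= c.

Definition at_most {X : Type} (n : nat) (A : X -> Prop) : Prop :=
  exists l : list X, (length l <= n)%nat /\ forall y, A y -> In y l.

Definition pos_n_expansive {X : Type} (d : X -> X -> R) (f : X -> X) (n : nat)
  : Prop :=
  exists c, 0 < c /\ forall x, at_most n (Ws d f c x).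

Definition transitive {X : Type} (d : X -> X -> R) (f : X -> X) : Prop :=
  forall U V : X -> Prop, m_open d U -> m_open d V ->
    (exists x, U x) -> (exists x, V x) ->
    exists (k : nat) (x : X), U x /\ V (iter f k x).

Definition zpow {X : Type} (f g : X -> X) (k : Z) (x : X) : X :=
  match k with
  | Z0 => x
  | Zpos p => iter f (Pos.to_nat p) x
  | Zneg p => iter g (Pos.to_nat p) x
  end.

Definition pseudo_orbit {X : Type} (d : X -> X -> R) (f : X -> X) (delta : R)
  (xs : Z -> X) : Prop := forall k, d (f (xs k)) (xs (k + 1)%Z) < delta.

Definition shadowed {X : Type} (d : X -> X -> R) (f g : X -> X) (eps : R)
  (xs : Z -> X) : Prop := exists y, forall k, d (zpow f g k y) (xs k) < eps.

Definition shadowing {X : Type} (d : X -> X -> R) (f g : X -> X) : Prop :=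
  forall eps, 0 < eps -> exists delta, 0 < delta /\
    forall xs, pseudo_orbit d f delta xs -> shadowed d f g eps xs.

Definition finite_type (X : Type) : Prop := exists l : list X, forall x, In x l.

(* Main.v *)
From Stdlib Require Import Lra Lia ZArith PArith Classical ClassicalEpsilon.
Require Import Defs.
From Stdlib Require Import Reals List.
Open Scope R_scope.

Definition infinite (A : nat -> Prop) : Prop :=
  forall M, exists m, (M <= m)%nat /\ A m.

Lemma pig1 {T : Type} (Zs : list T) (P : T -> nat -> Prop) : forall (A : nat -> Prop),
  infinite A -> (forall m, A m -> exists z, In z Zs /\ P z m) ->
  exists z, In z Zs /\ infinite (fun m => A m /\ P z m).
Proof.
  induction Zs as [|z0 Zs IH]; intros A HA H.
  - destruct (HA 0%nat) as [m [_ Hm]]. destruct (H m Hm) as [z [[] _]].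
  - destruct (classic (infinite (fun m => A m /\ P z0 m))) as [Hi|Hn].
    + exists z0; split; [left; reflexivity | exact Hi].
    + unfold infinite in Hn. apply not_all_ex_not in Hn. destruct Hn as [M HM].
      destruct (IH (fun m => A m /\ (M <= m)%nat)) as [z [Hz Hzi]].
      * intros M'. destruct (HA (max M M')) as [m [Hm1 Hm2]]. exists m.
        split; [lia|split; [exact Hm2|lia]].
      * intros m [Hm1 Hm2]. destruct (H m Hm1) as [z [[<-|Hz] Hp]].
        -- exfalso. apply HM. exists m. auto.
        -- exists z. auto.
      * exists z. split; [right; exact Hz|]. intros M'.
        destruct (Hzi M') as [m [Hm [[Hm1 _] Hm2]]]. exists m. auto.
Qed.

Lemma assign {X : Type} (Zs : list X) (R : X -> X -> nat -> Prop) (A : nat -> Prop)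
  (HA : infinite A) :
  forall F : list X,
  (forall m x, A m -> In x F -> exists z, In z Zs /\ R x z m) ->
  exists phi : X -> X, (forall x, In x F -> In (phi x) Zs) /\
    infinite (fun m => A m /\ forall x, In x F -> R x (phi x) m).
Proof.
  induction F as [|x0 F IH]; intros H.
  - exists (fun x => x). split; [intros x []|].
    intros M. destruct (HA M) as [m [? ?]]. exists m. split; auto. split; auto.
    intros x [].
  - destruct IH as [phi [Hphi Hinf]].
    { intros m x Hm Hx. apply H; auto. right; auto. }
    destruct (pig1 Zs (fun z m => R x0 z m) _ Hinf) as [z0 [Hz0 Hinf2]].
    { intros m [Hm _]. apply H; auto. left; auto. }
    exists (fun y => if excluded_middle_informative (y = x0) then z0 else phi y).
    split.
    + intros x Hx. destruct (excluded_middle_informative (x = x0)); auto.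
      destruct Hx as [<-|Hx]; [congruence|auto].
    + intros M. destruct (Hinf2 M) as [m [HM [[Hm HF] Hr]]]. exists m.
      split; auto. split; auto. intros x Hx.
      destruct (excluded_middle_informative (x = x0)) as [->|Hne]; auto.
      destruct Hx as [<-|Hx]; [congruence|auto].
Qed.

Lemma count {X : Type} (n : nat) (S : X -> X -> Prop) (F : list X) (phi : X -> X)
  (Hat : forall x, exists l : list X, (length l <= n)%nat /\ forall y, S x y -> In y l)
  (Hcl : forall x y, In x F -> In y F -> phi x = phi y -> S x y) :
  forall Zs : list X, exists L : list X, (length L <= n * length Zs)%nat /\
    forall x, In x F -> In (phi x) Zs -> In x L.
Proof.
  induction Zs as [|z Zs IH].
  - exists nil. split; [simpl; lia|]. intros x _ [].
  - destruct IH as [L [HL HLi]].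
    destruct (classic (exists x0, In x0 F /\ phi x0 = z)) as [[x0 [Hx0 Hp]]|Hno].
    + destruct (Hat x0) as [l [Hl Hli]]. exists (l ++ L). split.
      * rewrite length_app. simpl. lia.
      * intros x Hx [Hz|Hz]; apply in_or_app.
        -- left. apply Hli. apply Hcl; auto. congruence.
        -- right; auto.
    + exists L. split; [simpl; lia|]. intros x Hx [Hz|Hz]; auto.
      exfalso; apply Hno; eauto.
Qed.

Lemma collect {X : Type} (P : X -> X -> Prop)
  (H : forall a, exists l : list X, forall y, P a y -> In y l) :
  forall A : list X, exists Zs : list X, forall a y, In a A -> P a y -> In y Zs.
Proof.
  induction A as [|a A IH].
  - exists nil. intros a y [].
  - destruct IH as [Zs HZ]. destruct (H a) as [l Hl]. exists (l ++ Zs).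
    intros a' y [<-|Ha] Hp; apply in_or_app; [left|right]; eauto.
Qed.

Lemma build {X : Type} (H : forall F : list X, exists x, ~ In x F) :
  forall k, exists F : list X, NoDup F /\ length F = k.
Proof.
  induction k as [|k IH].
  - exists nil. split; [constructor|reflexivity].
  - destruct IH as [F [HF HL]]. destruct (H F) as [x Hx]. exists (x :: F).
    split; [constructor; auto|simpl; lia].
Qed.

Lemma iter_S_r {X : Type} (f : X -> X) (a : nat) (y : X) :
  iter f (S a) y = iter f a (f y).
Proof. revert y; induction a; intros y; simpl; auto. simpl in IHa. rewrite IHa; auto. Qed.

Lemma iter_add {X : Type} (f : X -> X) (a b : nat) (y : X) :
  iter f (a + b) y = iter f a (iter f b y).
Proof. induction a; simpl; auto. rewrite IHa; auto. Qed.

Lemma iter_cancel {X : Type} (f g : X -> X) (Hgf : forall x, g (f x) = x) (a : nat) :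
  forall y, iter g a (iter f a y) = y.
Proof.
  induction a; intros y; [reflexivity|].
  rewrite (iter_S_r f a y). change (g (iter g a (iter f a (f y))) = y).
  rewrite IHa. apply Hgf.
Qed.

Lemma zpow_pos {X : Type} (f g : X -> X) (k : nat) (y : X) :
  zpow f g (Z.of_nat k) y = iter f k y.
Proof. destruct k; simpl; auto. rewrite SuccNat2Pos.id_succ. reflexivity. Qed.

Lemma zpow_neg {X : Type} (f g : X -> X) (k : nat) (y : X) :
  zpow f g (- Z.of_nat (S k)) y = iter g (S k) y.
Proof. simpl. rewrite SuccNat2Pos.id_succ. reflexivity. Qed.

Theorem theoremB (X : Type) (d : X -> X -> R) (f g : X -> X) (n : nat) :
  is_metric d ->
  m_compact d ->
  homeomorphism d f ->
  (forall x, g (f x) = x) -> (forall x, f (g x) = x) ->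
  (1 <= n)%nat ->
  pos_n_expansive d f n ->
  transitive d f ->
  shadowing d f g ->
  finite_type X.
Proof.
  intros Hm Hc _ Hgf Hfg _ [c [Hc0 Hexp]] _ Hsh.
  destruct Hm as [dpos [deq [dsym dtri]]].
  assert (d0 : forall x, d x x = 0) by (intro x; apply deq; reflexivity).
  destruct (Hsh (c/4)) as [delta [Hdel Hsh']]; [lra|].
  set (r := Rmin delta (c/4)).
  assert (Hr : 0 < r) by (unfold r; apply Rmin_glb_lt; lra).
  assert (Hr1 : r <= delta) by apply Rmin_l.
  assert (Hr2 : r <= c/4) by apply Rmin_r.
  destruct (Hc X (fun a y => d a y < r)) as [A HA].
  { intros a y Hy. exists (r - d a y). split; [lra|]. intros y' Hy'.
    pose proof (dtri a y y'). lra. }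
  { intros x. exists x. rewrite d0. exact Hr. }
  destruct (collect (fun a y => Ws d f c a y)) with (A := A) as [Zs HZ].
  { intros a. destruct (Hexp a) as [l [_ Hl]]. exists l. exact Hl. }
  assert (Key : forall p, exists z, In z Zs /\
            forall j, d (iter g j p) (iter g j z) <= c/2).
  { intros p. destruct (HA p) as [a [Ha Hap]].
    set (xs := fun t : Z => match t with
                 | Zneg q => iter g (Pos.to_nat q) p
                 | _ => iter f (Z.to_nat t) a end).
    assert (Hps : pseudo_orbit d f delta xs).
    { intros t. destruct t as [|q|q].
      - simpl. rewrite d0. lra.
      - simpl. rewrite Pos2Nat.inj_add. simpl. rewrite Nat.add_comm. simpl.
        rewrite d0. lra.
      - destruct (Pos.succ_pred_or q) as [->|<-].
        + simpl. rewrite Hfg. rewrite dsym. lra.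
        + replace (Z.neg (Pos.succ (Pos.pred q)) + 1)%Z with (Z.neg (Pos.pred q)) by lia.
          simpl. rewrite Pos2Nat.inj_succ. simpl. rewrite Hfg. rewrite d0. lra. }
    destruct (Hsh' xs Hps) as [z Hz].
    exists z. split.
    - apply (HZ a z Ha). intros k. specialize (Hz (Z.of_nat k)).
      rewrite zpow_pos in Hz.
      replace (xs (Z.of_nat k)) with (iter f k a) in Hz.
      + lra.
      + destruct k; simpl; auto. rewrite SuccNat2Pos.id_succ. reflexivity.
    - intros [|j].
      + simpl. specialize (Hz 0%Z). simpl in Hz.
        pose proof (dtri p a z) as Ht. rewrite (dsym p a) in Ht. rewrite (dsym z a) in Hz. lra.
      + specialize (Hz (- Z.of_nat (S j))%Z). rewrite zpow_neg in Hz.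
        simpl in Hz. rewrite SuccNat2Pos.id_succ in Hz. rewrite dsym. simpl. simpl in Hz. lra. }
  apply NNPP. intros Hnf.
  assert (Hex : forall F : list X, exists x, ~ In x F).
  { intros F. apply not_all_not_ex. intros Hall. apply Hnf. exists F.
    intros x. apply NNPP. apply Hall. }
  destruct (build Hex (S (n * length Zs))) as [F [HF HFl]].
  set (Rel := fun x z m => forall j, d (iter g j (iter f m x)) (iter g j z) <= c/2).
  destruct (assign Zs Rel (fun _ => True)) with (F := F) as [phi [Hphi Hinf]].
  { intros M. exists M. split; auto. }
  { intros m x _ _. apply Key. }
  destruct (count n (fun x y => Ws d f c x y) F phi) with (Zs := Zs) as [L [HL HLi]].
  { intros x. destruct (Hexp x) as [l [Hl Hli]]. exists l. split; auto. }
  { intros x y Hx Hy Hxy k.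
    destruct (Hinf k) as [m [Hkm [_ Hall]]].
    pose proof (Hall x Hx (m - k)%nat) as H1.
    pose proof (Hall y Hy (m - k)%nat) as H2.
    assert (E : forall w, iter g (m - k) (iter f m w) = iter f k w).
    { intros w. replace m with ((m - k) + k)%nat at 2 by lia.
      rewrite iter_add. apply iter_cancel. exact Hgf. }
    rewrite E in H1, H2. rewrite Hxy in H1.
    pose proof (dtri (iter f k y) (iter g (m - k) (phi y)) (iter f k x)).
    rewrite (dsym (iter g (m - k) (phi y)) (iter f k x)) in H. lra. }
  assert (Hle : (length F <= length L)%nat).
  { apply NoDup_incl_length; auto. intros x Hx. apply HLi; auto. }
  lia.
Qed.
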